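(* Let $N\ge 2$. (Complex case.) Let $R$ be an $N\times N$ complex correlation matrix (Hermitian positive definite with unit diagonal), with Cholesky factorisation $R=LL^*$, $L$ lower triangular with positive diagonal, and let $\theta_{jp}\in(0,\pi)$ ($2\le j\le N$, $1\le p\le 2j-2$) be the angles with $$l_{jk}=\left(\cos\theta_{j,2k-1}+i\cos\theta_{j,2k}\sin\theta_{j,2k-1}\right)\prod_{p=1}^{2k-2}\sin\theta_{jp}\ (1\le k\le j-1),\qquad l_{jj}=\prod_{p=1}^{2j-2}\sin\theta_{jp}.$$ For $1\le k<j\le N$, let $R_{11}$ be the leading $(k-1)\times(k-1)$ principal block of $R$, $R/R_{11}=R_{22}-R_{21}R_{11}^{-1}R_{12}$ the Schur complement (indexed by $k,\dots,N$; equal to $R$ if $k=1$), and $\rho_{jk|\{1,\dots,k-1\}}=(R/R_{11})_{jk}\big/\big((R/R_{11})_{jj}(R/R_{11})_{kk}\big)^{1/2}$. Then $$\rho_{jk|\{1,\dots,k-1\}}=\cos\theta_{j,2k-1}+i\cos\theta_{j,2k}\sin\theta_{j,2k-1}.$$ (Quaternion case.) Let $R$ be an $N\times N$ quaternion correlation matrix, i.e. a $2N\times2N$ complex Hermitian positive definite matrix composed of $2\times 2$ blocks of the form $\begin{bmatrix}z&w\\-\bar w&\bar z\end{bmatrix}$ with diagonal blocks $I_2$, with block Cholesky factorisation $R=LL^*$, $L$ block lower triangular of the same block form with diagonal blocks $l_{jj}I_2$, $l_{jj}>0$. For an off-diagonal block $l_{jk}$ with parameters $(z,w)$ write $l^{(1)}_{jk}=\mathrm{Re}\,z$,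 $l^{(2)}_{jk}=\mathrm{Im}\,z$, $l^{(3)}_{jk}=\mathrm{Re}\,w$, $l^{(4)}_{jk}=\mathrm{Im}\,w$, and let $\theta_{jp}\in(0,\pi)$ ($2\le j\le N$, $1\le p\le 4j-4$) be the angles with $$l_{jk}^{(s)}=\cos\theta_{j,4(k-1)+s}\left(\prod_{m=1}^{s-1}\sin\theta_{j,4(k-1)+m}\right)\prod_{p=1}^{4(k-1)}\sin\theta_{jp}\ (1\le k\le j-1,\,1\le s\le4),\qquad l_{jj}=\prod_{p=1}^{4(j-1)}\sin\theta_{jp}.$$ For $1\le k<j\le N$ define the $2\times2$ block $\rho_{jk|\{1,\dots,k-1\}}=(R/R_{11})_{jk}\big/\big((R/R_{11})_{jj}(R/R_{11})_{kk}\big)^{1/2}$, where $R_{11}$ is the leading $2(k-1)\times2(k-1)$ principal block, $(R/R_{11})_{jk}$ denotes the $(j,k)$ $2\times2$ block of the Schur complement $R/R_{11}$, and the diagonal blocks $(R/R_{11})_{jj}$, $(R/R_{11})_{kk}$ are positive scalar multiples of $I_2$ (identified with those scalars). Then $$\rho_{jk|\{1,\dots,k-1\}}=\begin{bmatrix}z_{jk}&w_{jk}\\-\bar w_{jk}&\bar z_{jk}\end{bmatrix},$$ with $z_{jk}=\cos\theta_{j,4k-3}+i\cos\theta_{j,4k-2}\sin\theta_{j,4k-3}$ and $w_{jk}=\left(\cos\theta_{j,4k-1}+i\cos\theta_{j,4k}\sin\theta_{j,4k-1}\right)\sin\theta_{j,4k-3}\sin\theta_{j,4k-2}$.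
   Context: Empty products equal $1$; $L^*$ denotes conjugate transpose. The angles in each row are uniquely determined since each row of real coordinates of $L$ is a unit vector with positive last coordinate $l_{jj}$. *)

(* Defs.v *)
From mathcomp Require Import all_boot all_order all_algebra.
From mathcomp Require Export complex.
From mathcomp Require Export reals trigo.
Set Implicit Arguments. Unset Strict Implicit. Unset Printing Implicit Defensive.
Import Order.TTheory GRing.Theory Num.Theory.
Local Open Scope ring_scope.
Local Open Scope complex_scope.

(* Matrix indices are 0-based ordinals: the paper's index j (1-based)      *)
(* corresponds to the ordinal of value j-1.  Angle indices p stay 1-based. *)

Section Defs.
Variable R : realType.
Local Notation C := R[i].

Definition ctr m n (M : 'M[C]_(m, n)) : 'M[C]_(n, m) := (map_mx Num.conj M)^T.

Definition is_hermitian n (M : 'M[C]_n) : Prop := ctr M = M.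

Definition posdef n (M : 'M[C]_n) : Prop :=
  forall v : 'cV[C]_n, v != 0 -> 0 < (ctr v *m M *m v) 0 0.

Definition lead_blk (n m : nat) (le : (m <= n)%N) (M : 'M[C]_n) : 'M[C]_m :=
  \matrix_(a < m, b < m) M (widen_ord le a) (widen_ord le b).

(* Matrix whose rows/columns of index >= m carry the Schur complement
   R/R11 = R22 - R21 R11^{-1} R12, R11 the leading m x m block
   (indices of R/R11 are those of R, i.e. m, ..., n-1 in 0-based form). *)
Definition schur (n m : nat) (le : (m <= n)%N) (M : 'M[C]_n) : 'M[C]_n :=
  M - (\matrix_(i < n, a < m) M i (widen_ord le a)) *m invmx (lead_blk le M)
      *m (\matrix_(a < m, j < n) M (widen_ord le a) j).

(* k : 'I_N (0-based) gives the size of the leading block R11 *)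
Lemma ord_le N (k : 'I_N) : (k <= N)%N.
Proof. exact: ltnW (ltn_ord k). Qed.

Lemma ord_le2 N (k : 'I_N) : (k * 2 <= N * 2)%N.
Proof. by rewrite leq_mul2r ord_le orbT. Qed.

Lemma bidx_lt N (j : 'I_N) (a : 'I_2) : (j * 2 + a < N * 2)%N.
Proof.
have hj := ltn_ord j; have ha := ltn_ord a.
rewrite -[(N * 2)%N]/(N * 2)%N.
have : (j.+1 * 2 <= N * 2)%N by rewrite leq_mul2r hj orbT.
by rewrite mulSn; move: ha; case: (nat_of_ord a) => [|[|]] //= _ h; apply: leq_trans h; rewrite addnC ?ltn_add2l ?leq_add2r //.
Qed.

Definition bidx N (j : 'I_N) (a : 'I_2) : 'I_(N * 2) := Ordinal (bidx_lt j a).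

Definition blk N (M : 'M[C]_(N * 2)) (j k : 'I_N) : 'M[C]_2 :=
  \matrix_(a < 2, b < 2) M (bidx j a) (bidx k b).

Definition qblock (z w : C) : 'M[C]_2 :=
  \matrix_(a < 2, b < 2)
    if a == ord0 then (if b == ord0 then z else w)
    else (if b == ord0 then - w^* else z^*).

End Defs.

(* Main.v *)
Require Import Defs.
From mathcomp Require Import all_boot all_order all_algebra.
From mathcomp Require Import complex reals trigo.
From mathcomp Require Import zify ring lra.
Set Implicit Arguments. Unset Strict Implicit. Unset Printing Implicit Defensive.
Import Order.TTheory GRing.Theory Num.Theory.
Local Open Scope ring_scope.
Local Open Scope complex_scope.

Lemma ctrE {R : realType} m n (M : 'M[R[i]]_(m,n)) i j : ctr M i j = Num.conj (M j i).
Proof. by rewrite /ctr !mxE. Qed.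

Lemma sum_split {R : realType} n m (le : (m <= n)%N) (F : 'I_n -> R[i]) :
  \sum_c F c = \sum_(a < m) F (widen_ord le a) + \sum_(c : 'I_n | ~~ (c < m)%N) F c.
Proof. by rewrite (bigID (fun c : 'I_n => (c < m)%N)) /= big_ord_narrow. Qed.

Definition Lcut {R : realType} n m (le : (m <= n)%N) (L : 'M[R[i]]_n) : 'M[R[i]]_(n, m) :=
  \matrix_(i < n, a < m) L i (widen_ord le a).

Lemma schurE {R : realType} n m (le : (m <= n)%N) (L : 'M[R[i]]_n) :
  (forall i j : 'I_n, (i < j)%N -> L i j = 0) ->
  (forall i : 'I_n, L i i != 0) ->
  schur le (L *m ctr L) = L *m ctr L - Lcut le L *m ctr (Lcut le L).
Proof.
move=> Lt Ld.
set Lm := Lcut le L.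
set L11 := lead_blk le L.
have hcol : \matrix_(i < n, a < m) (L *m ctr L) i (widen_ord le a) = Lm *m ctr L11.
  apply/matrixP => i a; rewrite !mxE (sum_split le) [X in _ + X]big1 ?addr0.
    by apply eq_bigr => c _; rewrite !ctrE !mxE.
  move=> c hc; rewrite ctrE Lt ?conjC0 ?mulr0 //.
  by move: hc (ltn_ord a) => /=; lia.
have hrow : \matrix_(a < m, j < n) (L *m ctr L) (widen_ord le a) j = L11 *m ctr Lm.
  apply/matrixP => a i; rewrite !mxE (sum_split le) [X in _ + X]big1 ?addr0.
    by apply eq_bigr => c _; rewrite !ctrE !mxE.
  move=> c hc; rewrite Lt ?mul0r //.
  by move: hc (ltn_ord a) => /=; lia.
have hlead : lead_blk le (L *m ctr L) = L11 *m ctr L11.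
  apply/matrixP => a b; rewrite !mxE (sum_split le) [X in _ + X]big1 ?addr0.
    by apply eq_bigr => c _; rewrite !ctrE !mxE.
  move=> c hc; rewrite Lt ?mul0r //.
  by move: hc (ltn_ord a) => /=; lia.
rewrite /schur hcol hrow hlead.
have uL : L11 \in unitmx.
  rewrite unitmxE det_trig; last first.
    by apply/is_trig_mxP => a b hab; rewrite mxE Lt.
  by rewrite unitfE; apply/prodf_neq0 => a _; rewrite mxE.
have uU : ctr L11 \in unitmx by rewrite /ctr unitmx_tr map_unitmx.
have uA : L11 *m ctr L11 \in unitmx by rewrite unitmx_mul uL uU.
congr (_ - _).
rewrite -{1}(mulKmx uL (ctr L11)) [Lm *m _]mulmxA (mulmxK uA) -mulmxA (mulKmx uL).
by [].
Qed.


Lemma conjE {R : realType} (x : R[i]) : Num.conj x = conjc x.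
Proof.
have h := normCK x.
have e : x * conjc x = `|x| ^+ 2.
  case: x {h} => a b.
  rewrite -[`|(_ +i* _)%C|]/(Num.sqrt (a ^+ 2 + b ^+ 2))%:C%C -rmorphXn /= sqr_sqrtr ?addr_ge0 ?sqr_ge0 //.
  apply/eqP; rewrite eq_complex /=; apply/andP; split; apply/eqP; ring.
have [->|nz] := eqVneq x 0; first by rewrite rmorph0 conjc0.
by apply: (mulfI nz); rewrite e h.
Qed.

Lemma conjR {R : realType} (x : R) : Num.conj (x%:C) = x%:C.
Proof. by rewrite conjE conjc_real. Qed.

Lemma schur_head {R : realType} n m (le : (m <= n)%N) (L : 'M[R[i]]_n) a b :
  (forall i j : 'I_n, (i < j)%N -> L i j = 0) ->
  (forall i : 'I_n, L i i != 0) ->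
  schur le (L *m ctr L) a b = (L *m ctr L) a b
     - \sum_(c < m) L a (widen_ord le c) * Num.conj (L b (widen_ord le c)).
Proof.
move=> Lt Ld; rewrite schurE // [in LHS]mxE; congr (_ + _); rewrite mxE; congr (- _).
by rewrite mxE; apply: eq_bigr => c _; rewrite ctrE !mxE.
Qed.

Lemma schur_tail {R : realType} n m (le : (m <= n)%N) (L : 'M[R[i]]_n) a b :
  (forall i j : 'I_n, (i < j)%N -> L i j = 0) ->
  (forall i : 'I_n, L i i != 0) ->
  schur le (L *m ctr L) a b = \sum_(c : 'I_n | ~~ (c < m)%N) L a c * Num.conj (L b c).
Proof.
move=> Lt Ld; rewrite schur_head // mxE (sum_split le).
rewrite addrAC (_ : \sum_(a0 < m) _ = \sum_(c < m) L a (widen_ord le c) * Num.conj (L b (widen_ord le c))).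
  by rewrite subrr add0r; apply: eq_bigr => c _; rewrite ctrE.
by apply: eq_bigr => c _; rewrite ctrE.
Qed.

Lemma schur_one {R : realType} n m (le : (m <= n)%N) (L : 'M[R[i]]_n) (a b : 'I_n) :
  (forall i j : 'I_n, (i < j)%N -> L i j = 0) ->
  (forall i : 'I_n, L i i != 0) ->
  ~~ (b < m)%N -> (forall c : 'I_n, ~~ (c < m)%N -> c != b -> L b c = 0) ->
  schur le (L *m ctr L) a b = L a b * Num.conj (L b b).
Proof.
move=> Lt Ld hb hc; rewrite schur_tail // (bigD1 b) //= big1 ?addr0 //.
by move=> c /andP[c1 c2]; rewrite hc // rmorph0 mulr0.
Qed.

Lemma tele {R : realType} k (P : nat -> R) (F : 'I_k -> R[i]) :
  (forall c : 'I_k, F c = (P c ^+ 2 - P c.+1 ^+ 2)%:C) ->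
  \sum_(c < k) F c = (P 0%N ^+ 2 - P k ^+ 2)%:C.
Proof.
move=> H; rewrite (eq_bigr (fun c : 'I_k => (P c ^+ 2 - P c.+1 ^+ 2)%:C)) //.
elim: k {F H} => [|k IH]; first by rewrite big_ord0 subrr.
by rewrite big_ord_recr /= IH -rmorphD /= addrA subrK.
Qed.

Lemma hyp2 {R : realType} (a b P : R) :
  ((cos a)%:C + 'i*(cos b * sin a)%:C) * P%:C * Num.conj(((cos a)%:C + 'i*(cos b * sin a)%:C) * P%:C)
  = (P^+2 - (P * sin a * sin b)^+2)%:C.
Proof.
have ca : cos a ^+ 2 = 1 - sin a ^+ 2 by rewrite -(cos2Dsin2 a) addrK.
have cb : cos b ^+ 2 = 1 - sin b ^+ 2 by rewrite -(cos2Dsin2 b) addrK.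
rewrite conjE.
apply/eqP; rewrite eq_complex /=; apply/andP; split; apply/eqP; last by ring.
transitivity (P ^+ 2 * (cos a ^+ 2 + cos b ^+ 2 * sin a ^+ 2)); first by ring.
rewrite ca cb; ring.
Qed.

Lemma Pstep2 {R : realType} (f : nat -> R) c :
  \prod_(1 <= p < (2 * c.+1).+1) f p = \prod_(1 <= p < (2 * c).+1) f p * f (2 * c).+1 * f (2 * c).+2.
Proof.
rewrite (_ : (2 * c.+1).+1 = ((2 * c).+2).+1); last by rewrite mulnS.
by rewrite big_nat_recr // big_nat_recr //.
Qed.

Lemma Ppos {R : realType} (f : nat -> R) n : (forall p, (1 <= p <= n)%N -> 0 < f p) ->
  0 < \prod_(1 <= p < n.+1) f p.
Proof.
move=> H; rewrite big_nat_cond; apply: prodr_gt0 => p /andP[/andP[h1 h2] _].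
by apply: H; rewrite h1.
Qed.


Lemma bidx_surj N (i : 'I_(N * 2)) : exists j a, i = @bidx N j a.
Proof.
have hj : (i %/ 2 < N)%N by rewrite ltn_divLR // (ltn_ord i).
exists (Ordinal hj), (Ordinal (ltn_pmod i (isT : (0 < 2)%N))).
by apply: val_inj => /=; exact: divn_eq.
Qed.

Lemma pairsum_nat {R : realType} (g : nat -> R[i]) k :
  \sum_(c < k * 2) g c = \sum_(m < k) (g (m * 2)%N + g (m * 2).+1).
Proof.
elim: k => [|k IH]; first by rewrite !big_ord0.
rewrite [RHS]big_ord_recr /= -IH.
rewrite (_ : (k.+1 * 2 = (k * 2).+2)%N); last by rewrite mulSnr addn2.
by rewrite big_ord_recr big_ord_recr /= addrA.
Qed.

Lemma pairsum {R : realType} N k (le : (k <= N)%N) (le2 : (k * 2 <= N * 2)%N) (i0 : 'I_(N * 2))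
  (F : 'I_(N * 2) -> R[i]) :
  \sum_(c < k * 2) F (widen_ord le2 c)
  = \sum_(m < k) (F (bidx (widen_ord le m) ord0) + F (bidx (widen_ord le m) ord_max)).
Proof.
pose g c := F (insubd i0 c).
have gE : forall c : 'I_(N * 2), F c = g c.
  by move=> c; rewrite /g; congr F; apply: val_inj; rewrite insubdK //; exact: ltn_ord.
rewrite (eq_bigr (fun c : 'I_(k * 2) => g c)) => [|c _]; last by rewrite gE.
rewrite (eq_bigr (fun m : 'I_k => g (m * 2)%N + g (m * 2).+1)) => [|m _]; last first.
  by rewrite !gE /= addn0 addn1.
exact: pairsum_nat.
Qed.

Lemma Pstep4 {R : realType} (f : nat -> R) c :
  \prod_(1 <= p < (4 * c.+1).+1) f p = \prod_(1 <= p < (4 * c).+1) f p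
     * f (4 * c).+1 * f (4 * c).+2 * f (4 * c).+3 * f (4 * c).+4.
Proof.
rewrite (_ : (4 * c.+1).+1 = ((4 * c).+4).+1); last by rewrite mulnS.
by rewrite big_nat_recr // big_nat_recr // big_nat_recr // big_nat_recr.
Qed.

Lemma smallprods {R : realType} (f : nat -> R) n :
  [/\ \prod_(1 <= m < 1) f (n + m)%N = 1,
      \prod_(1 <= m < 2) f (n + m)%N = f n.+1,
      \prod_(1 <= m < 3) f (n + m)%N = f n.+1 * f n.+2 &
      \prod_(1 <= m < 4) f (n + m)%N = f n.+1 * f n.+2 * f n.+3].
Proof.
split; first by rewrite big_geq.
- by rewrite big_nat1 addn1.
- by rewrite big_nat_recr // big_nat1 addn1 addn2.
- by rewrite big_nat_recr // big_nat_recr // big_nat1 addn1 addn2 addn3.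
Qed.

Lemma hyp4 {R : realType} (f : nat -> R) n P :
  let l s := cos (f (n + s)%N) * (\prod_(1 <= m < s) sin (f (n + m)%N)) * P in
  ((l 1%N)%:C + 'i * (l 2%N)%:C) * Num.conj ((l 1%N)%:C + 'i * (l 2%N)%:C)
  + ((l 3%N)%:C + 'i * (l 4%N)%:C) * Num.conj ((l 3%N)%:C + 'i * (l 4%N)%:C)
  = (P ^+ 2 - (P * sin (f n.+1) * sin (f n.+2) * sin (f n.+3) * sin (f n.+4)) ^+ 2)%:C.
Proof.
move=> l; rewrite /l; have [-> -> -> ->] := smallprods (fun x => sin (f x)) n.
rewrite addn1 addn2 addn3 addn4 !conjE.
have c1 : cos (f n.+1) ^+ 2 = 1 - sin (f n.+1) ^+ 2 by rewrite -(cos2Dsin2 (f n.+1)) addrK.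
have c2 : cos (f n.+2) ^+ 2 = 1 - sin (f n.+2) ^+ 2 by rewrite -(cos2Dsin2 (f n.+2)) addrK.
have c3 : cos (f n.+3) ^+ 2 = 1 - sin (f n.+3) ^+ 2 by rewrite -(cos2Dsin2 (f n.+3)) addrK.
have c4 : cos (f n.+4) ^+ 2 = 1 - sin (f n.+4) ^+ 2 by rewrite -(cos2Dsin2 (f n.+4)) addrK.
apply/eqP; rewrite eq_complex /=; apply/andP; split; apply/eqP; last by ring.
transitivity (P ^+ 2 * (cos (f n.+1) ^+ 2 + sin (f n.+1) ^+ 2 * (cos (f n.+2) ^+ 2
   + sin (f n.+2) ^+ 2 * (cos (f n.+3) ^+ 2 + sin (f n.+3) ^+ 2 * cos (f n.+4) ^+ 2))));
  first by ring.
rewrite c1 c2 c3 c4; ring.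
Qed.



Lemma complex_case (R : realType) (N : nat) :
  (forall (Rm L : 'M[R[i]]_N) (theta : 'I_N -> nat -> R),
     is_hermitian Rm -> posdef Rm -> (forall i, Rm i i = 1) ->
     (forall i j : 'I_N, (i < j)%N -> L i j = 0) ->
     (forall i : 'I_N, exists l : R, 0 < l /\ L i i = l%:C) ->
     Rm = L *m ctr L ->
     (forall (j : 'I_N) (p : nat), (1 <= j)%N -> (1 <= p <= 2 * j)%N ->
        0 < theta j p < pi) ->
     (forall j k : 'I_N, (1 <= j)%N -> (k < j)%N ->
        L j k = ((cos (theta j (2 * k).+1))%:C
                 + 'i * (cos (theta j (2 * k).+2) * sin (theta j (2 * k).+1))%:C)
                * (\prod_(1 <= p < (2 * k).+1) sin (theta j p))%:C) ->
     (forall j : 'I_N, (1 <= j)%N ->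
        L j j = (\prod_(1 <= p < (2 * j).+1) sin (theta j p))%:C) ->
     forall j k : 'I_N, (k < j)%N ->
       let S := schur (ord_le k) Rm in
       S j k / sqrtC (S j j * S k k)
       = (cos (theta j (2 * k).+1))%:C
         + 'i * (cos (theta j (2 * k).+2) * sin (theta j (2 * k).+1))%:C).
Proof.
move=> Rm L theta _ _ Rd Lt Ldiag Rm_eq th Ljk _ j k kj S.
subst Rm.
have Ld0 : forall i, L i i != 0.
  by move=> i; case: (Ldiag i) => l [l0 ->]; rewrite fmorph_eq0 lt0r_neq0.
have [lk [lk0 Lkk]] := Ldiag k.
have j1 : (1 <= j)%N by apply: leq_ltn_trans kj.
pose P := fun c : nat => \prod_(1 <= p < (2 * c).+1) sin (theta j p).
have Pk0 : 0 < P k.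
  apply: Ppos => p /andP[p1 p2]; apply: sin_gt0_pi; apply: th => //; rewrite p1 /=.
  by apply: leq_trans p2 _; rewrite leq_mul2l ltnW.
have tailk : forall c : 'I_N, ~~ (c < k)%N -> c != k -> L k c = 0.
  move=> c hc hck; apply: Lt.
  by rewrite ltn_neqAle leqNgt hc andbT val_eqE eq_sym.
have Sjk : S j k = L j k * Num.conj (L k k).
  by rewrite /S schur_one // ltnn.
have Skk : S k k = L k k * Num.conj (L k k).
  by rewrite /S schur_one // ltnn.
have Sjj : S j j = (P k ^+ 2)%:C.
  rewrite /S schur_head // Rd (@tele R k P).
    by rewrite /P big_geq // expr1n rmorphB rmorph1 /= opprB addrC subrK.
  move=> c; rewrite Ljk //=; last by apply: leq_trans (ltn_ord c) (ltnW kj).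
  by rewrite hyp2 /P Pstep2.
rewrite Sjk Sjj Skk Lkk (Ljk j k j1 kj) !conjR.
have -> : (P k ^+ 2)%:C * (lk%:C * lk%:C) = ((P k * lk)%:C) ^+ 2.
  by apply/eqP; rewrite eq_complex /=; apply/andP; split; apply/eqP; ring.
rewrite sqrCK; last by rewrite lecR mulr_ge0 // ltW.
have nz : (P k * lk)%:C != 0 by rewrite fmorph_eq0 mulf_neq0 // lt0r_neq0.
change (\prod_(1 <= p < (2 * k).+1) sin (theta j p)) with (P k).
rewrite -(mulrA _ _ lk%:C).
have -> : (P k)%:C * lk%:C = (P k * lk)%:C :> R[i].
  by apply/eqP; rewrite eq_complex /=; apply/andP; split; apply/eqP; ring.
by rewrite mulfK.
Qed.

Lemma quat_case (R : realType) (N : nat) :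
  (forall (Rm L : 'M[R[i]]_(N * 2)) (theta : 'I_N -> nat -> R),
     is_hermitian Rm -> posdef Rm ->
     (forall j k : 'I_N, exists z w, blk Rm j k = qblock z w) ->
     (forall j : 'I_N, blk Rm j j = 1%:M) ->
     (forall j k : 'I_N, (j < k)%N -> blk L j k = 0) ->
     (forall j : 'I_N, exists l : R, 0 < l /\ blk L j j = (l%:C)%:M) ->
     Rm = L *m ctr L ->
     (forall (j : 'I_N) (p : nat), (1 <= j)%N -> (1 <= p <= 4 * j)%N ->
        0 < theta j p < pi) ->
     (forall j k : 'I_N, (1 <= j)%N -> (k < j)%N ->
        let P := \prod_(1 <= p < (4 * k).+1) sin (theta j p) in
        let l (s : nat) := cos (theta j (4 * k + s)%N)
                   * (\prod_(1 <= m < s) sin (theta j (4 * k + m)%N)) * P in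
        blk L j k = qblock ((l 1%N)%:C + 'i * (l 2%N)%:C)
                           ((l 3%N)%:C + 'i * (l 4%N)%:C)) ->
     (forall j : 'I_N, (1 <= j)%N ->
        blk L j j = ((\prod_(1 <= p < (4 * j).+1) sin (theta j p))%:C)%:M) ->
     forall j k : 'I_N, (k < j)%N ->
       let S := schur (ord_le2 k) Rm in
       let s (i : 'I_N) := S (bidx i ord0) (bidx i ord0) in
       (sqrtC (s j * s k))^-1 *: blk S j k
       = qblock ((cos (theta j (4 * k).+1))%:C
                 + 'i * (cos (theta j (4 * k).+2) * sin (theta j (4 * k).+1))%:C)
                (((cos (theta j (4 * k).+3))%:C
                  + 'i * (cos (theta j (4 * k).+4) * sin (theta j (4 * k).+3))%:C)
                 * (sin (theta j (4 * k).+1) * sin (theta j (4 * k).+2))%:C)).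
Proof.
move=> Rm L theta _ _ _ Rdiag Lt Ldiag Rm_eq th Ljk _ j k kj S s.
subst Rm.
have Lent : forall (a b : 'I_N) (x y : 'I_2), L (bidx a x) (bidx b y) = blk L a b x y.
  by move=> *; rewrite mxE.
have Lt' : forall a b : 'I_(N * 2), (a < b)%N -> L a b = 0.
  move=> a b; case: (bidx_surj a) => ja [xa ->]; case: (bidx_surj b) => jb [xb ->] /= hab.
  rewrite Lent; case: (ltngtP ja jb) => h.
  - by rewrite Lt // mxE.
  - by exfalso; move: hab (ltn_ord xa) (ltn_ord xb) h; lia.
  - have e : ja = jb by apply: val_inj.
    subst jb; case: (Ldiag ja) => l [_ ->]; rewrite mxE.
    have : (xa : nat) != xb by move: hab; lia.
    by rewrite val_eqE => /negbTE ->; rewrite mulr0n.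
have Ld0 : forall i, L i i != 0.
  move=> i; case: (bidx_surj i) => ji [xi ->]; rewrite Lent.
  by case: (Ldiag ji) => l [l0 ->]; rewrite mxE eqxx mulr1n fmorph_eq0 lt0r_neq0.
have [lk [lk0 Lkk]] := Ldiag k.
have Lkb : forall b : 'I_2, L (bidx k b) (bidx k b) = lk%:C.
  by move=> b; rewrite Lent Lkk mxE eqxx mulr1n.
have Sent : forall (a : 'I_(N * 2)) (b : 'I_2), S a (bidx k b) = L a (bidx k b) * lk%:C.
  move=> a b; rewrite /S schur_one //.
  - by rewrite Lkb conjR.
  - by rewrite /= -leqNgt leq_addr.
  move=> c hc hcb; case: (ltngtP (bidx k b) c) => h.
  - exact: Lt'.
  - move: hc hcb h; case: (bidx_surj c) => jc [xc ->] hc hcb h.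
    have e : jc = k.
      by apply: val_inj; move: hc h (ltn_ord xc) (ltn_ord b) => /=; lia.
    subst jc; rewrite Lent Lkk mxE.
    have : (b : nat) != xc by move: h => /=; lia.
    by rewrite val_eqE => /negbTE ->; rewrite mulr0n.
  - by move/val_inj: h => h; rewrite h eqxx in hcb.
have skE : s k = lk%:C * lk%:C by rewrite /s Sent Lkb.
have j1 : (1 <= j)%N by apply: leq_ltn_trans kj.
pose P := fun c : nat => \prod_(1 <= p < (4 * c).+1) sin (theta j p).
have Pk0 : 0 < P k.
  apply: Ppos => p /andP[p1 p2]; apply: sin_gt0_pi; apply: th => //; rewrite p1 /=.
  by apply: leq_trans p2 _; rewrite leq_mul2l ltnW.
have sjE : s j = (P k ^+ 2)%:C.
  rewrite /s /S schur_head //.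
  have -> : (L *m ctr L) (bidx j ord0) (bidx j ord0) = 1.
    have := congr1 (fun M : 'M[R[i]]_2 => M ord0 ord0) (Rdiag j).
    by rewrite /= {1}mxE => ->; rewrite mxE.
  rewrite (pairsum (ord_le k) (ord_le2 k) (bidx j ord0) (fun c => L (bidx j ord0) c * Num.conj (L (bidx j ord0) c))) (@tele R k P).
    by rewrite /P big_geq // expr1n rmorphB rmorph1 /= opprB addrC subrK.
  move=> c.
  have hm : (widen_ord (ord_le k) c < j)%N by apply: leq_trans (ltn_ord c) (ltnW kj).
  have E := Ljk j (widen_ord (ord_le k) c) j1 hm.
  rewrite !Lent E !mxE /=.
  rewrite hyp4 /P Pstep4.
  by [].
have blkS : blk S j k = lk%:C *: blk L j k.
  by apply/matrixP => a b; rewrite [LHS]mxE Sent !mxE mulrC.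
rewrite blkS sjE skE.
have -> : (P k ^+ 2)%:C * (lk%:C * lk%:C) = ((P k * lk)%:C) ^+ 2.
  by apply/eqP; rewrite eq_complex /=; apply/andP; split; apply/eqP; ring.
rewrite sqrCK; last by rewrite lecR mulr_ge0 // ltW.
rewrite scalerA.
have lkn : lk != 0 by rewrite lt0r_neq0.
have Pkn : P k != 0 by rewrite lt0r_neq0.
have -> : ((P k * lk)%:C)^-1 * lk%:C = ((P k)^-1)%:C.
  rewrite -fmorphV -rmorphM /=; congr (_%:C); field.
  by rewrite lkn Pkn.
have E := Ljk j k j1 kj.
rewrite E.
have [e1 e2 e3 e4] := smallprods (fun x => sin (theta j x)) (4 * k).
apply/matrixP => a b; rewrite !mxE.
rewrite e1 e2 e3 e4 addn1 addn2 addn3 addn4.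
change (\prod_(1 <= p < (4 * k).+1) sin (theta j p)) with (P k).
case: a => [[|[|a]] ha] //; case: b => [[|[|b]] hb] //=;
  apply/eqP; rewrite eq_complex /=; apply/andP; split; apply/eqP; field; exact: Pkn.
Qed.

Theorem mainTheorem7 (R : realType) (N : nat) (hN : (2 <= N)%N) :
  (* ---------------- complex case ---------------- *)
  (forall (Rm L : 'M[R[i]]_N) (theta : 'I_N -> nat -> R),
     is_hermitian Rm -> posdef Rm -> (forall i, Rm i i = 1) ->
     (forall i j : 'I_N, (i < j)%N -> L i j = 0) ->
     (forall i : 'I_N, exists l : R, 0 < l /\ L i i = l%:C) ->
     Rm = L *m ctr L ->
     (forall (j : 'I_N) (p : nat), (1 <= j)%N -> (1 <= p <= 2 * j)%N ->
        0 < theta j p < pi) ->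
     (forall j k : 'I_N, (1 <= j)%N -> (k < j)%N ->
        L j k = ((cos (theta j (2 * k).+1))%:C
                 + 'i * (cos (theta j (2 * k).+2) * sin (theta j (2 * k).+1))%:C)
                * (\prod_(1 <= p < (2 * k).+1) sin (theta j p))%:C) ->
     (forall j : 'I_N, (1 <= j)%N ->
        L j j = (\prod_(1 <= p < (2 * j).+1) sin (theta j p))%:C) ->
     forall j k : 'I_N, (k < j)%N ->
       let S := schur (ord_le k) Rm in
       S j k / sqrtC (S j j * S k k)
       = (cos (theta j (2 * k).+1))%:C
         + 'i * (cos (theta j (2 * k).+2) * sin (theta j (2 * k).+1))%:C)
  /\
  (* ---------------- quaternion case ---------------- *)
  (forall (Rm L : 'M[R[i]]_(N * 2)) (theta : 'I_N -> nat -> R),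
     is_hermitian Rm -> posdef Rm ->
     (forall j k : 'I_N, exists z w, blk Rm j k = qblock z w) ->
     (forall j : 'I_N, blk Rm j j = 1%:M) ->
     (forall j k : 'I_N, (j < k)%N -> blk L j k = 0) ->
     (forall j : 'I_N, exists l : R, 0 < l /\ blk L j j = (l%:C)%:M) ->
     Rm = L *m ctr L ->
     (forall (j : 'I_N) (p : nat), (1 <= j)%N -> (1 <= p <= 4 * j)%N ->
        0 < theta j p < pi) ->
     (forall j k : 'I_N, (1 <= j)%N -> (k < j)%N ->
        let P := \prod_(1 <= p < (4 * k).+1) sin (theta j p) in
        let l (s : nat) := cos (theta j (4 * k + s)%N)
                   * (\prod_(1 <= m < s) sin (theta j (4 * k + m)%N)) * P in
        blk L j k = qblock ((l 1%N)%:C + 'i * (l 2%N)%:C)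
                           ((l 3%N)%:C + 'i * (l 4%N)%:C)) ->
     (forall j : 'I_N, (1 <= j)%N ->
        blk L j j = ((\prod_(1 <= p < (4 * j).+1) sin (theta j p))%:C)%:M) ->
     forall j k : 'I_N, (k < j)%N ->
       let S := schur (ord_le2 k) Rm in
       let s (i : 'I_N) := S (bidx i ord0) (bidx i ord0) in
       (sqrtC (s j * s k))^-1 *: blk S j k
       = qblock ((cos (theta j (4 * k).+1))%:C
                 + 'i * (cos (theta j (4 * k).+2) * sin (theta j (4 * k).+1))%:C)
                (((cos (theta j (4 * k).+3))%:C
                  + 'i * (cos (theta j (4 * k).+4) * sin (theta j (4 * k).+3))%:C)
                 * (sin (theta j (4 * k).+1) * sin (theta j (4 * k).+2))%:C)).
Proof.
split; [exact: complex_case | exact: quat_case].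
Qed.
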